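(* For coprime integers $n,m>1$, $$m_2\!\left(\mathbb{Z}_{nm}^2\right)\le\min\left\{n\cdot m_2\!\left(\mathbb{Z}_m^2\right),\ m\cdot m_2\!\left(\mathbb{Z}_n^2\right)\right\}.$$
   Context: $\mathbb{Z}_k=\mathbb{Z}/k\mathbb{Z}$. A line in $\mathbb{Z}_k^2$ is a translate of a cyclic subgroup of order $k$ of the additive group $\mathbb{Z}_k^2$; points are collinear if they lie on a common line. A cap in $\mathbb{Z}_k^2$ is a subset no three distinct points of which are collinear. $m_2(\mathbb{Z}_k^2)$ denotes the maximum cardinality of a cap in $\mathbb{Z}_k^2$. *)

(* Defs.v *)
From mathcomp Require Import all_boot.
Set Implicit Arguments. Unset Strict Implicit. Unset Printing Implicit Defensive.

(* The plane Z_k^2 is represented by pairs of residues 'I_k * 'I_k, with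
   arithmetic done modulo k on the underlying naturals. *)
Definition pt (k : nat) : finType := ('I_k * 'I_k)%type.

(* The translate p + <g> of the cyclic subgroup generated by g;
   since t ranges over 0..k-1, this covers all multiples of g. *)
Definition tline (k : nat) (p g : pt k) : {set pt k} :=
  [set x : pt k | [exists t : 'I_k,
     (x.1 == (p.1 + t * g.1) %% k :> nat) && (x.2 == (p.2 + t * g.2) %% k :> nat)]].

Definition cyc (k : nat) (g : pt k) : {set pt k} :=
  [set x : pt k | [exists t : 'I_k,
     (x.1 == (t * g.1) %% k :> nat) && (x.2 == (t * g.2) %% k :> nat)]].

Definition is_line (k : nat) (L : {set pt k}) : bool :=
  [exists p : pt k, exists g : pt k, (#|cyc g| == k) && (L == tline p g)].

Definition collinear3 (k : nat) (x y z : pt k) : bool :=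
  [exists L : {set pt k}, [&& is_line L, x \in L, y \in L & z \in L]].

Definition is_cap (k : nat) (A : {set pt k}) : bool :=
  [forall x in A, forall y in A, forall z in A,
     [&& x != y, y != z & x != z] ==> ~~ collinear3 x y z].

Definition m2 (k : nat) : nat :=
  \max_(A : {set pt k} | is_cap A) #|A|.

(* Main.v *)
Require Import Defs.
From mathcomp Require Import all_boot zify.
Set Implicit Arguments. Unset Strict Implicit. Unset Printing Implicit Defensive.

Definition prim k (g : pt k) := forall t, k %| t * g.1 -> k %| t * g.2 -> k %| t.

Definition fmul k (Hk : 0 < k) (g : pt k) (t : 'I_k) : pt k :=
  (Ordinal (ltn_pmod (t * g.1) Hk), Ordinal (ltn_pmod (t * g.2) Hk)).

Lemma cycE k (Hk : 0 < k) (g : pt k) : cyc g = [set fmul Hk g t | t in 'I_k].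
Proof.
apply/setP => x; rewrite inE; apply/existsP/imsetP.
  case=> t /andP[/eqP h1 /eqP h2]; exists t => //.
  by case: x h1 h2 => [x1 x2] /= h1 h2; congr pair; apply: val_inj.
case=> t _ ->; exists t; by rewrite /= !eqxx.
Qed.

Lemma cyc_prim k (Hk : 0 < k) (g : pt k) : #|cyc g| = k <-> prim g.
Proof.
rewrite (cycE Hk); split.
  move=> h; have /imset_injP : #|[set fmul Hk g t | t in 'I_k]| == #|'I_k| by rewrite h card_ord.
  move=> inj t h1 h2.
  have e : fmul Hk g (Ordinal (ltn_pmod t Hk)) = fmul Hk g (Ordinal Hk).
    congr pair; apply: val_inj => /=; rewrite mul0n mod0n modnMml; exact/eqP.
  move/(congr1 val): (inj _ _ isT isT e) => /= /eqP.
  by rewrite /dvdn.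
move=> pr; rewrite -[RHS](card_ord k); apply/eqP/imset_injP.
move=> t1 t2 _ _ /= e.
have e1 := congr1 (fun p => val p.1) e. have e2 := congr1 (fun p => val p.2) e.
simpl in e1, e2; clear e.
apply: val_inj => /=.
wlog le : t1 t2 e1 e2 / t1 <= t2.
  move=> W; case: (leqP t1 t2) => h; first exact: W.
  by symmetry; apply: W => //; exact: ltnW.
have d : k %| t2 - t1.
  apply: pr; rewrite mulnBl -eqn_mod_dvd ?leq_mul2r ?le ?orbT //; apply/eqP; by [].
apply/eqP; rewrite eqn_leq le /=.
move: d; rewrite -eqn_mod_dvd // !modn_small //.
by move/eqP->.
Qed.

Lemma tlineP k (Hk : 0 < k) (w p g : pt k) (t : nat) :
  w.1 = p.1 + t * g.1 %[mod k] -> w.2 = p.2 + t * g.2 %[mod k] -> w \in tline p g.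
Proof.
move=> h1 h2; rewrite inE; apply/existsP; exists (Ordinal (ltn_pmod t Hk)) => /=.
apply/andP; split; apply/eqP.
  by rewrite -modnDmr modnMml modnDmr -h1 modn_small.
by rewrite -modnDmr modnMml modnDmr -h2 modn_small.
Qed.

Lemma tlineE k (w p g : pt k) : w \in tline p g ->
  exists t, w.1 = p.1 + t * g.1 %[mod k] /\ w.2 = p.2 + t * g.2 %[mod k].
Proof.
rewrite inE => /existsP[t /andP[/eqP h1 /eqP h2]]; exists t.
by rewrite {1}h1 {1}h2 !modn_mod.
Qed.

Definition pim m (Hm : 0 < m) N (x : pt N) : pt m :=
  (Ordinal (ltn_pmod x.1 Hm), Ordinal (ltn_pmod x.2 Hm)).

Lemma prim_card k (Hk : 0 < k) (g : pt k) : prim g -> #|cyc g| = k.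
Proof. by move=> h; apply/(cyc_prim Hk). Qed.

Lemma dir_exists m (Hm1 : 1 < m) (a b : nat) : a < m -> b < m ->
  exists g : pt m, exists t, #|cyc g| = m /\ t * g.1 = a %[mod m] /\ t * g.2 = b %[mod m].
Proof.
move=> am bm. have Hm : 0 < m by apply: ltnW.
have [e0|epos] := posnP (gcdn a b).
  have : ~~ (0 < gcdn a b) by rewrite e0.
  rewrite gcdn_gt0 negb_or !lt0n !negbK => /andP[/eqP -> /eqP ->].
  exists (Ordinal Hm1, Ordinal Hm), 0; split => //.
  apply: (prim_card Hm) => t /=; by rewrite muln1.
set e := gcdn a b in epos *.
have la : a %/ e < m by apply: leq_ltn_trans (leq_div _ _) am.
have lb : b %/ e < m by apply: leq_ltn_trans (leq_div _ _) bm.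
exists (Ordinal la, Ordinal lb), e; split; last first.
  by rewrite /= ![e * _]mulnC !divnK ?dvdn_gcdl ?dvdn_gcdr.
apply: (prim_card Hm) => t /= h1 h2.
have g1 : gcdn (a %/ e) (b %/ e) = 1.
  apply/eqP; rewrite -(eqn_pmul2r epos) mul1n muln_gcdl !divnK ?dvdn_gcdl ?dvdn_gcdr //.
have : m %| gcdn (t * (a %/ e)) (t * (b %/ e)) by rewrite dvdn_gcd h1 h2.
by rewrite -muln_gcdr g1 muln1.
Qed.

Lemma cong_am d a a' t t' b b' : a = a' %[mod d] -> t = t' %[mod d] ->
  b = b' %[mod d] -> a + t * b = a' + t' * b' %[mod d].
Proof.
move=> ha ht hb.
by rewrite -modnDm -modnMm ha ht hb modnMm modnDm.
Qed.

Definition mk k (Hk : 0 < k) (a b : nat) : pt k :=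
  (Ordinal (ltn_pmod a Hk), Ordinal (ltn_pmod b Hk)).

Lemma HNpos n m : 0 < n -> 0 < m -> 0 < n * m.
Proof. by move=> a b; rewrite muln_gt0 a b. Qed.

Section Gen.
Variables (n m : nat) (Hn : 0 < n) (Hm : 0 < m) (co : coprime n m).
Let HN : 0 < n * m := HNpos Hn Hm.

Lemma crt_eq a b : a = b %[mod n] -> a = b %[mod m] -> a = b %[mod n * m].
Proof. by move=> h1 h2; apply/eqP; rewrite chinese_remainder // h1 h2 !eqxx. Qed.

Lemma modNn a : a %% (n * m) = a %[mod n].
Proof. by rewrite modn_dvdm // dvdn_mulr. Qed.
Lemma modNm a : a %% (n * m) = a %[mod m].
Proof. by rewrite modn_dvdm // dvdn_mull. Qed.

Variables (x : pt (n * m)) (p g : pt m).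
Definition P := mk HN (chinese n m x.1 p.1) (chinese n m x.2 p.2).
Definition G := mk HN (chinese n m 0 g.1) (chinese n m 1 g.2).

Lemma gen_mem (w : pt (n * m)) : w.1 = x.1 %[mod n] -> pim Hm w \in tline p g ->
  w \in tline P G.
Proof.
move=> h1 /tlineE [tw /= [e1 e2]].
rewrite !modn_mod in e1 e2.
have le : x.2 <= n * x.2 by rewrite leq_pmull.
set s := w.2 + (n * x.2 - x.2).
apply: (tlineP HN (t := chinese n m s tw)) => /=; apply: crt_eq.
- rewrite (cong_am (a' := x.1) (t' := s) (b' := 0)) ?modNn ?chinese_modl //.
  by rewrite muln0 addn0.
- by rewrite (cong_am (a' := p.1) (t' := tw) (b' := g.1)) ?modNm ?chinese_modr.
- rewrite (cong_am (a' := x.2) (t' := s) (b' := 1)) ?modNn ?chinese_modl //.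
  rewrite muln1 /s addnA addnC addnA subnK // (mulnC n (x.2 : nat)) modnMDl //.
- by rewrite (cong_am (a' := p.2) (t' := tw) (b' := g.2)) ?modNm ?chinese_modr.
Qed.

Lemma G_card : #|cyc g| = m -> #|cyc G| = n * m.
Proof.
move/(cyc_prim Hm) => pg; apply/(cyc_prim HN) => t /= d1 d2.
have -> : t = t - 0 by rewrite subn0.
rewrite -eqn_mod_dvd // chinese_remainder //; apply/andP; split.
  have : n %| t * (chinese n m 1 g.2 %% (n * m)) by apply: dvdn_trans d2; apply: dvdn_mulr.
  rewrite /dvdn -modnMmr modNn chinese_modl // modnMmr muln1 => /eqP ->; by rewrite mod0n.
suff : m %| t by rewrite /dvdn mod0n.
apply: pg.
  have : m %| t * (chinese n m 0 g.1 %% (n * m)) by apply: dvdn_trans d1; apply: dvdn_mull.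
  by rewrite /dvdn -modnMmr modNm chinese_modr // modnMmr.
have : m %| t * (chinese n m 1 g.2 %% (n * m)) by apply: dvdn_trans d2; apply: dvdn_mull.
by rewrite /dvdn -modnMmr modNm chinese_modr // modnMmr.
Qed.

Lemma gen (y z : pt (n * m)) : #|cyc g| = m ->
  y.1 = x.1 %[mod n] -> z.1 = x.1 %[mod n] ->
  pim Hm x \in tline p g -> pim Hm y \in tline p g -> pim Hm z \in tline p g ->
  collinear3 x y z.
Proof.
move=> cg hy hz mx my mz.
rewrite /collinear3; apply/existsP; exists (tline P G); rewrite !gen_mem // ?andbT //.
by rewrite /is_line; apply/existsP; exists P; apply/existsP; exists G; rewrite G_card ?eqxx.
Qed.
End Gen.

Lemma capP k (A : {set pt k}) x y z : is_cap A -> x \in A -> y \in A -> z \in A ->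
  x != y -> y != z -> x != z -> ~~ collinear3 x y z.
Proof.
move=> /forall_inP/(_ x) H xA yA zA xy yz xz.
move: (H xA) => /forall_inP/(_ y yA)/forall_inP/(_ z zA)/implyP; apply.
by rewrite xy yz xz.
Qed.

Lemma two_cap k (a b : pt k) : is_cap [set a; b].
Proof.
apply/forall_inP => x xA; apply/forall_inP => y yA; apply/forall_inP => z zA.
apply/implyP => /and3P[xy yz xz]; exfalso.
move: xA yA zA xy yz xz; rewrite !in_set2.
by case/orP=> /eqP ->; case/orP=> /eqP ->; case/orP=> /eqP ->; rewrite ?eqxx ?andbF.
Qed.

Lemma m2_ge2 m : 1 < m -> 2 <= m2 m.
Proof.
move=> Hm1; have Hm : 0 < m by apply: ltnW.
have := leq_bigmax_cond (F := fun A : {set pt m} => #|A|) _ (two_cap (Ordinal Hm, Ordinal Hm) (Ordinal Hm1, Ordinal Hm)).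
by rewrite cards2 /=.
Qed.

Section Fiber.
Variables (n m : nat) (Hn : 0 < n) (Hm1 : 1 < m) (co : coprime n m).
Let Hm : 0 < m := ltnW Hm1.

Lemma fiber (A : {set pt (n * m)}) (c : nat) : is_cap A ->
  #|[set x in A | x.1 %% n == c]| <= m2 m.
Proof.
move=> capA; set F := [set x in A | x.1 %% n == c].
have Fmod : forall u v, u \in F -> v \in F -> u.1 = v.1 %[mod n].
  by move=> u v; rewrite !inE => /andP[_ /eqP->] /andP[_ /eqP->].
have FA : forall u, u \in F -> u \in A by move=> u; rewrite inE => /andP[].
case: (boolP [forall x in F, forall y in F, (pim Hm x == pim Hm y) ==> (x == y)]) => [inj|ninj].
  have injF : {in F &, injective (@pim m Hm (n * m))}.
    move=> x y xF yF e; apply/eqP.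
    by move: inj => /forall_inP/(_ x xF)/forall_inP/(_ y yF)/implyP; apply; rewrite e.
  rewrite -(card_in_imset injF).
  apply: (leq_bigmax_cond (F := fun A : {set pt m} => #|A|)).
  apply/forall_inP => X /imsetP[x xF ->]; apply/forall_inP => Y /imsetP[y yF ->].
  apply/forall_inP => Z /imsetP[z zF ->].
  apply/implyP => /and3P[xy yz xz]; apply/negP => /existsP[L /and4P[/existsP[p /existsP[g /andP[/eqP cg /eqP ->]]] mx my mz]].
  have col : collinear3 x y z.
    by apply: (gen (Hm:=Hm) (p:=p) Hn co cg (Fmod _ _ yF xF) (Fmod _ _ zF xF)).
  have xy' : x != y by apply: contraNneq xy => ->.
  have yz' : y != z by apply: contraNneq yz => ->.
  have xz' : x != z by apply: contraNneq xz => ->.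
  by have := capP capA (FA _ xF) (FA _ yF) (FA _ zF) xy' yz' xz'; rewrite col.
have [x xF [y yF [xy exy]]] : exists2 x, x \in F & exists2 y, y \in F & ((x != y) /\ pim Hm x = pim Hm y).
  move: ninj; rewrite negb_forall_in => /existsP[x /andP[xF]].
  rewrite negb_forall_in => /existsP[y /andP[yF]]; rewrite negb_imply => /andP[/eqP e ne].
  by exists x => //; exists y.
apply: (leq_trans _ (m2_ge2 Hm1)).
case: (boolP (F \subset [set x; y])) => [sub|].
  by apply: (leq_trans (subset_leq_card sub)); rewrite cards2; case: (x != y).
case/subsetPn => z zF; rewrite in_set2 negb_or => /andP[zx zy].
exfalso.
set X := pim Hm x; set Z := pim Hm z.
have la : (Z.1 + (m * X.1 - X.1)) %% m < m by apply: ltn_pmod.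
have lb : (Z.2 + (m * X.2 - X.2)) %% m < m by apply: ltn_pmod.
have [g [t [cg [e1 e2]]]] := dir_exists Hm1 la lb.
have mX : X \in tline X g by apply: (tlineP Hm (t := 0)); rewrite mul0n addn0.
have mZ : Z \in tline X g.
  have le1 : X.1 <= m * X.1 by rewrite leq_pmull.
  have le2 : X.2 <= m * X.2 by rewrite leq_pmull.
  apply: (tlineP Hm (t := t)); rewrite -modnDmr ?e1 ?e2 modn_mod modnDmr.
    by rewrite addnA addnC addnA subnK // (mulnC m (X.1 : nat)) modnMDl.
  by rewrite addnA addnC addnA subnK // (mulnC m (X.2 : nat)) modnMDl.
have col : collinear3 x y z.
  apply: (gen (Hm:=Hm) (p:=X) Hn co cg (Fmod _ _ yF xF) (Fmod _ _ zF xF)) => //.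
  by rewrite -exy.
have zx' : x != z by rewrite eq_sym.
have zy' : y != z by rewrite eq_sym.
by have := capP capA (FA _ xF) (FA _ yF) (FA _ zF) xy zy' zx'; rewrite col.
Qed.

Lemma key : m2 (n * m) <= n * m2 m.
Proof.
apply/bigmax_leqP => A capA.
rewrite -sum1_card (partition_big (fun x : pt (n * m) => Ordinal (ltn_pmod x.1 Hn)) xpredT) //=.
apply: (@leq_trans (\sum_(j < n) m2 m)); last by rewrite sum_nat_const card_ord.
apply: leq_sum => j _.
apply: leq_trans (fiber j capA).
rewrite sum1_card; apply: subset_leq_card; apply/subsetP => x; rewrite !inE.
by case/andP=> -> /eqP <- /=.
Qed.
End Fiber.

Theorem mainTheorem8 (n m : nat) :
  1 < n -> 1 < m -> coprime n m ->
  m2 (n * m) <= minn (n * m2 m) (m * m2 n).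
Proof.
move=> hn hm co; rewrite leq_min key ?(ltnW hn) //=.
by rewrite mulnC key ?(ltnW hm) // coprime_sym.
Qed.
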